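(* In the transactional panorama model with the lenses and metrics described in the context, each $k$-relaxed variant has no greater staleness and no smaller invisibility than its corresponding base lens: $S(k\text{-GCNB})\le S(\mathrm{GCNB})$, $I(k\text{-GCNB})\ge I(\mathrm{GCNB})$, $S(k\text{-LCNB})\le S(\mathrm{LCNB})$, $I(k\text{-LCNB})\ge I(\mathrm{LCNB})$, $S(k\text{-LCMB})\le S(\mathrm{LCMB})$, and $I(k\text{-LCMB})\ge I(\mathrm{LCMB})$, for any $k\ge 0$.
   Context: A view graph is a DAG on a set $N$ of nodes (source data and views). Write transactions are processed one at a time; write transaction $w^{t_i}$ creates version $G^{t_i}$ with state set $V^{t_i}$ containing, for each node $n_k$, either its computed new result $v_k^{t_i}$, a placeholder $UC_k^{t_i}$ if $w^{t_i}$ updates $n_k$ but has not yet computed it, or its result from the previous version if $n_k$ is not updated. A version is committed once all its new results are computed; at any time there is the committed graph (most recently committed version, no UCs) and the latest graph (version of the most recent write transaction). Read transactions $r^{s_1},\dots,r^{s_m}$ each read the views in the current viewport and return immediately a set $H^{s_i}$ of states (results or UCs); $Time(r^{s_i})$ is its return time. A returned state's timestamp is that of its version. Lenses: GCNB returns the viewport states from the committed graph. LCNB returns them from the more recent of the committed and latest graphs that has zero UCs for the viewport. LCMB: if reading either the committed or the latest graph preserves monotonicity (no view gets a state with smaller timestamp than previously read), behave like LCNB; otherwise read the latest graph. $k$-GCNB reads the latest graph if it has at most $k$ UCs in total, otherwise the committed graph. $k$-LCNB reads the more recent of the committed and latest graphs having at most $k$ UCs for the viewport. $k$-LCMB: if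 reading either graph preserves monotonicity, behave like $k$-LCNB; otherwise read the latest graph. Metrics for $R=\{r^{s_1},\dots,r^{s_m}\}$: invisibility $I(R)=\sum_{i=1}^{m-1}|H^{s_i}_{UC}|\,(Time(r^{s_{i+1}})-Time(r^{s_i}))$ where $H^{s_i}_{UC}$ is the set of UCs in $H^{s_i}$; staleness $S(R)=\sum_{i=1}^{m-1}\sum_{v_k^{t_j}\in H^{s_i}_{qr}}\mathbf{1}[v_k^{t_j}\notin V^{t_i}]\,(Time(r^{s_{i+1}})-Time(r^{s_i}))$ where $H^{s_i}_{qr}$ is the set of view results in $H^{s_i}$ and $G^{t_i}$ is the latest version before $r^{s_i}$ starts. $S(A)$, $I(A)$ denote these metrics under lens $A$; lenses are compared on the same write transactions, the same order of computing new view results, and the same sequence of read transactions. *)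

(* Defs.v *)
From HB Require Import structures.
From mathcomp Require Import all_boot all_order all_algebra.
Set Implicit Arguments. Unset Strict Implicit. Unset Printing Implicit Defensive.
Import Order.TTheory GRing.Theory Num.Theory.
Local Open Scope ring_scope.

(* A state of a node: a computed result, or a placeholder UC, tagged with the
   timestamp (= index) of the version (write transaction) that created it.
   Version 0 is the initial graph, whose states are all results. *)
Inductive state := Res of nat | UC of nat.

Definition state_code (s : state) : bool * nat :=
  match s with Res j => (true, j) | UC j => (false, j) end.
Definition state_decode (p : bool * nat) : state :=
  if p.1 then Res p.2 else UC p.2.
Lemma state_codeK : cancel state_code state_decode. Proof. by case. Qed.
HB.instance Definition _ := Equality.copy state (can_type state_codeK).

Definition ts (s : state) : nat := match s with Res j => j | UC j => j end.
Definition is_UC (s : state) : bool := if s is UC _ then true else false.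
Definition is_res (s : state) : bool := ~~ is_UC s.

(* The write workload: nW write transactions w^1 .. w^nW (timestamps 1..nW),
   w^j arrives at time arr j, updates the nodes in upd j, and the new result
   of node n for w^j becomes available at time comp j n. *)
Record workload (N : finType) (R : realFieldType) := Workload {
  nW : nat;
  upd : nat -> {set N};
  arr : nat -> R;
  comp : nat -> N -> R
}.

Definition wf_workload (N : finType) (R : realFieldType) (W : workload N R) :=
  (forall i j, (1 <= i)%N -> (i <= j)%N -> (j <= nW W)%N -> arr W i <= arr W j) /\
  (forall j n, (1 <= j)%N -> (j <= nW W)%N -> n \in upd W j -> arr W j <= comp W j n).

Section Model.
Variables (N : finType) (R : realFieldType) (W : workload N R).

Fixpoint last_upd (j : nat) (n : N) : nat :=
  match j with
  | 0 => 0
  | j'.+1 => if n \in upd W j'.+1 then j'.+1 else last_upd j' n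
  end.

Definition node_state (tau : R) (j : nat) (n : N) : state :=
  let l := last_upd j n in
  if l == 0%N then Res 0
  else if comp W l n <= tau then Res l else UC l.

Definition n_UC (tau : R) (j : nat) (A : {set N}) : nat :=
  #|[set n in A | is_UC (node_state tau j n)]|.

Definition latest_ver (tau : R) : nat :=
  \max_(j < (nW W).+1 | (j == 0%N :> nat) || (arr W j <= tau)) j.

Definition committed_ver (tau : R) : nat :=
  \max_(j < (latest_ver tau).+1 | n_UC tau j setT == 0%N) j.

(* a performed read: (time, viewport, version read) *)
Definition rd := (R * {set N} * nat)%type.

(* reading version j for viewport V preserves monotonicity w.r.t. the
   previous reads hist: no view gets a state with a smaller timestamp than
   one previously read for it *)
Definition preserves (hist : seq rd) (V : {set N}) (j : nat) : bool :=
  all (fun p : rd => [forall n in V, (n \in p.1.2) ==>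
         (ts (node_state p.1.1 p.2 n) <= ts (node_state p.1.1 j n))%N]) hist.

End Model.

Inductive lens :=
  | GCNB | LCNB | LCMB
  | kGCNB of nat | kLCNB of nat | kLCMB of nat.

Section Lenses.
Variables (N : finType) (R : realFieldType) (W : workload N R).

(* the more recent of the committed and latest graphs satisfying ok
   (the committed graph has zero UCs, so it always satisfies ok below) *)
Definition more_recent (tau : R) (ok : nat -> bool) : nat :=
  if ok (latest_ver W tau) then latest_ver W tau else committed_ver W tau.

Definition choose (L : lens) (hist : seq (rd N R)) (tau : R) (V : {set N}) : nat :=
  let c := committed_ver W tau in
  let l := latest_ver W tau in
  let lcnb := more_recent tau (fun j => n_UC W tau j V == 0%N) in
  let klcnb k := more_recent tau (fun j => (n_UC W tau j V <= k)%N) in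
  let both := preserves W hist V c && preserves W hist V l in
  match L with
  | GCNB => c
  | LCNB => lcnb
  | LCMB => if both then lcnb else l
  | kGCNB k => if (n_UC W tau l setT <= k)%N then l else c
  | kLCNB k => klcnb k
  | kLCMB k => if both then klcnb k else l
  end.

Fixpoint run_aux (L : lens) (hist : seq (rd N R)) (reads : seq (R * {set N}))
  : seq (rd N R) :=
  match reads with
  | [::] => [::]
  | (tau, V) :: rs =>
      let r := (tau, V, choose L hist tau V) in
      r :: run_aux L (rcons hist r) rs
  end.

(* execution of the read transactions r^{s_1},...,r^{s_m} under lens L;
   each read is given by its (return) time and its viewport *)
Definition run (L : lens) (reads : seq (R * {set N})) : seq (rd N R) :=
  run_aux L [::] reads.

Fixpoint weighted (f : rd N R -> nat) (e : seq (rd N R)) : R :=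
  match e with
  | x :: ((y :: _) as rest) => (f x)%:R * (y.1.1 - x.1.1) + weighted f rest
  | _ => 0
  end.

Definition n_uc_read (r : rd N R) : nat :=
  #|[set n in r.1.2 | is_UC (node_state W r.1.1 r.2 n)]|.

Definition n_stale_read (r : rd N R) : nat :=
  #|[set n in r.1.2 | is_res (node_state W r.1.1 r.2 n) &&
       (node_state W r.1.1 r.2 n != node_state W r.1.1 (latest_ver W r.1.1) n)]|.

Definition invisibility (L : lens) reads : R := weighted n_uc_read (run L reads).
Definition staleness (L : lens) reads : R := weighted n_stale_read (run L reads).

End Lenses.

(* Main.v *)
Require Import Defs.
From HB Require Import structures.
From mathcomp Require Import all_boot all_order all_algebra.
Import Order.TTheory GRing.Theory Num.Theory.
Local Open Scope ring_scope.

Section Aux.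
Variables (N : finType) (R : realFieldType) (W : workload N R).

Lemma last_upd_le n j : (last_upd W j n <= j)%N.
Proof. by elim: j => //= j IH; case: ifP => // _; apply: leq_trans IH _. Qed.

Lemma last_upd_mono n i j : (i <= j)%N -> (last_upd W i n <= last_upd W j n)%N.
Proof.
elim: j => [|j IH]; first by rewrite leqn0 => /eqP ->.
rewrite leq_eqVlt => /orP [/eqP -> //|]; rewrite ltnS => /IH H /=.
case: ifP => // _; apply: leq_trans H _.
exact: leq_trans (last_upd_le n j) _.
Qed.

Lemma ts_node tau j n : ts (node_state W tau j n) = last_upd W j n.
Proof.
rewrite /node_state; case: eqP => [->|_] //; by case: ifP.
Qed.

Lemma committed_le tau : (committed_ver W tau <= latest_ver W tau)%N.
Proof.
apply/bigmax_leqP => i _; by rewrite -ltnS ltn_ord.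
Qed.

Lemma committed_zero tau : n_UC W tau (committed_ver W tau) setT = 0%N.
Proof.
rewrite /committed_ver.
have P0 : n_UC W tau (@ord0 (latest_ver W tau)) setT == 0%N.
  rewrite /n_UC cards_eq0; apply/eqP/setP => n; rewrite !inE.
  by rewrite /node_state /=.
rewrite (@bigop.bigmax_eq_arg _ ord0 _ _ P0).
by case: arg_maxnP => //= i /eqP.
Qed.

Definition relr (r1 r2 : rd N R) :=
  r1.1 = r2.1 /\ (r1.2 = r2.2 \/
    (r1.2 = latest_ver W r1.1.1 /\ r2.2 = committed_ver W r1.1.1)).

Lemma relr_stale r1 r2 : relr r1 r2 ->
  (n_stale_read W r1 <= n_stale_read W r2)%N.
Proof.
case: r1 r2 => [[t1 V1] v1] [[t2 V2] v2] [/= [<- <-]] [-> //|[-> _]].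
suff -> : n_stale_read W (t1, V1, latest_ver W t1) = 0%N by [].
rewrite /n_stale_read /=; apply/eqP; rewrite cards_eq0; apply/eqP/setP => n.
by rewrite !inE eqxx andbF andbF.
Qed.

Lemma relr_uc r1 r2 : relr r1 r2 ->
  (n_uc_read W r2 <= n_uc_read W r1)%N.
Proof.
case: r1 r2 => [[t1 V1] v1] [[t2 V2] v2] [/= [<- <-]] [-> //|[_ ->]].
have := committed_zero t1; rewrite /n_UC /n_uc_read /= => /eqP.
rewrite !cards_eq0 => /eqP /setP H.
suff -> : [set n in V1 | is_UC (node_state W t1 (committed_ver W t1) n)] = set0 by rewrite cards0.
apply/setP => n; have := H n; rewrite !inE => Hn.
by rewrite /= in Hn; rewrite Hn andbF.
Qed.

Fixpoint rel2 (Q : rd N R -> rd N R -> Prop) (e1 e2 : seq (rd N R)) : Prop :=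
  match e1, e2 with
  | [::], [::] => True
  | x :: e1, y :: e2 => Q x y /\ rel2 Q e1 e2
  | _, _ => False
  end.

Lemma rel2_flip Q e1 e2 : rel2 Q e1 e2 -> rel2 (fun x y => Q y x) e2 e1.
Proof. by elim: e1 e2 => [|a e IH] [|b e'] //= [Hab /IH]. Qed.

Lemma weighted_le (f g : rd N R -> nat) (Q : rd N R -> rd N R -> Prop) :
  (forall x y, Q x y -> x.1.1 = y.1.1 /\ (f x <= g y)%N) ->
  forall e1 e2, rel2 Q e1 e2 ->
  sorted (fun x y : rd N R => x.1.1 <= y.1.1) e1 ->
  weighted f e1 <= weighted g e2.
Proof.
move=> HQ; elim=> [|x e1 IH] [|x' e2] //=.
case=> Qx Hall Hs.
have := IH _ Hall (path_sorted Hs).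
case: e1 e2 Hall Hs {IH} => [|y e1] [|y' e2] //= [Qy _] /andP [Hxy _] Hle.
have [tx fx] := HQ _ _ Qx; have [ty _] := HQ _ _ Qy.
apply: lerD => //; rewrite -tx -ty; apply: ler_wpM2r; first by rewrite subr_ge0.
by rewrite ler_nat.
Qed.

Lemma run_fst L h rs : map (fun r : rd N R => r.1) (run_aux W L h rs) = rs.
Proof. by elim: rs h => [|[t V] rs IH] h //=; rewrite IH. Qed.

Lemma run_sorted L rs : sorted (fun x y : R * {set N} => x.1 <= y.1) rs ->
  sorted (fun x y : rd N R => x.1.1 <= y.1.1) (run W L rs).
Proof.
move=> Hs; have := Hs; rewrite -{1}(run_fst L [::] rs) sorted_map.
by [].
Qed.

Lemma run_rel L1 L2 (Inv : seq (rd N R) -> seq (rd N R) -> Prop) :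
  (forall h1 h2 tau V, Inv h1 h2 ->
     relr (tau, V, Defs.choose W L1 h1 tau V) (tau, V, Defs.choose W L2 h2 tau V) /\
     Inv (rcons h1 (tau, V, Defs.choose W L1 h1 tau V)) (rcons h2 (tau, V, Defs.choose W L2 h2 tau V))) ->
  forall rs h1 h2, Inv h1 h2 ->
  rel2 relr (run_aux W L1 h1 rs) (run_aux W L2 h2 rs).
Proof.
move=> H; elim=> [|[t V] rs IH] h1 h2 Hi //=.
have [Hr Hi'] := H h1 h2 t V Hi.
by split => //; apply: IH.
Qed.

Lemma final L1 L2 rs Inv :
  (forall h1 h2 tau V, Inv h1 h2 ->
     relr (tau, V, Defs.choose W L1 h1 tau V) (tau, V, Defs.choose W L2 h2 tau V) /\
     Inv (rcons h1 (tau, V, Defs.choose W L1 h1 tau V)) (rcons h2 (tau, V, Defs.choose W L2 h2 tau V))) ->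
  Inv [::] [::] ->
  sorted (fun x y : R * {set N} => x.1 <= y.1) rs ->
  staleness W L1 rs <= staleness W L2 rs /\ invisibility W L2 rs <= invisibility W L1 rs.
Proof.
move=> H H0 Hs; have Ha := @run_rel L1 L2 Inv H rs [::] [::] H0.
split.
  rewrite /staleness; apply: (@weighted_le (n_stale_read W) (n_stale_read W) relr _ _ _ Ha (run_sorted L1 rs Hs)).
  by move=> x y Hxy; split; [case: Hxy => -> | exact: relr_stale].
rewrite /invisibility; apply: (@weighted_le (n_uc_read W) (n_uc_read W) (fun x y => relr y x) _ _ _ _ (run_sorted L2 rs Hs)).
  by move=> x y Hxy; split; [case: Hxy => -> | exact: relr_uc].
exact: rel2_flip Ha.
Qed.

Lemma relr_le r1 r2 : relr r1 r2 -> (r2.2 <= r1.2)%N.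
Proof. by case=> _ [-> //|[-> ->]]; apply: committed_le. Qed.

Lemma pres_rcons h1 h2 r1 r2 :
  (forall V j, preserves W h1 V j -> preserves W h2 V j) -> relr r1 r2 ->
  forall V j, preserves W (rcons h1 r1) V j -> preserves W (rcons h2 r2) V j.
Proof.
move=> Hh Hr V j; rewrite /preserves !all_rcons => /andP [H1 H2].
apply/andP; split; last exact: Hh H2.
have Hle := relr_le r1 r2 Hr; case: Hr => E _.
apply/forallP => n; apply/implyP => nV; apply/implyP => nV'.
move/forallP: H1 => /(_ n); rewrite nV /= E nV' /= !ts_node => H.
rewrite ?ts_node; apply: leq_trans H; exact: last_upd_mono.
Qed.

End Aux.

Theorem theorem2p11 (N : finType) (R : realFieldType) (W : workload N R)
  (reads : seq (R * {set N})) (k : nat) :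
  wf_workload W ->
  sorted (fun x y : R * {set N} => x.1 <= y.1) reads ->
  (staleness W (kGCNB k) reads <= staleness W GCNB reads /\
   invisibility W (kGCNB k) reads >= invisibility W GCNB reads) /\
  (staleness W (kLCNB k) reads <= staleness W LCNB reads /\
   invisibility W (kLCNB k) reads >= invisibility W LCNB reads) /\
  (staleness W (kLCMB k) reads <= staleness W LCMB reads /\
   invisibility W (kLCMB k) reads >= invisibility W LCMB reads).
Proof.
move=> _ Hs.
split; last split.
- apply: (final N R W (kGCNB k) GCNB reads (fun _ _ => True)) => // h1 h2 tau V _; split => //.
  rewrite /relr /=; split => //.
  case: ifP => _; [right | left]; by [].
- apply: (final N R W (kLCNB k) LCNB reads (fun _ _ => True)) => // h1 h2 tau V _; split => //.
  rewrite /relr /= /more_recent; split => //.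
  case: ifP => Hk; case: ifP => H0 //; try by [left|right].
  by move/eqP: H0 Hk => ->.
- apply: (final N R W (kLCMB k) LCMB reads
     (fun h1 h2 => forall V j, preserves W h1 V j -> preserves W h2 V j)) => //.
  move=> h1 h2 tau V Hi.
  have Hr : relr N R W (tau, V, Defs.choose W (kLCMB k) h1 tau V) (tau, V, Defs.choose W LCMB h2 tau V).
    rewrite /relr /= /more_recent; split => //.
    case: ifP => Hb1.
      move/andP: Hb1 => [/Hi -> /Hi ->] /=.
      case: ifP => Hk; case: ifP => H0 //; try by [left|right].
      by move/eqP: H0 Hk => ->.
    case: ifP => _; last by left.
    case: ifP => _; [left | right]; by [].
  split => //; exact: pres_rcons _ _ _ _ Hi Hr.
Qed.
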